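(* Let $k\ge 2$ be an integer and $a>0$. Let $L=L_a$ be the $k\times k$ lower bidiagonal matrix with all diagonal entries equal to $a$, all entries directly below the diagonal equal to $-a$, and all other entries $0$. (This is the reduced graph Laplacian of the hierarchical-leadership flock $[0,1,\dots,k]$ in which each agent $i>0$ is led only by agent $i-1$, at an instant when $a_{i,i-1}=a$ for all $i>0$.) Then the smallest eigenvalue of $L$ is $\xi=a$, but there exists no inner product $\langle\cdot,\cdot\rangle$ on $\mathbb{R}^k$ such that \[\langle Lv,v\rangle\ge a\langle v,v\rangle\qquad\text{for all } v\in\mathbb{R}^k.\]
   Context: The reduced Laplacian of a flock $[0,1,\dots,k]$ with connectivity coefficients $a_{ij}\ge 0$ is the restriction of $D-K$ (with $K=(a_{ij})_{0\le i,j\le k}$, $D=\mathrm{diag}(d_0,\dots,d_k)$, $d_i=\sum_j a_{ij}$) to the coordinates $1,\dots,k$; for the chain described in the claim it is exactly the matrix $L_a$ given there. *)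

(* Defs.v *)
From mathcomp Require Import all_boot all_order all_algebra.
Set Implicit Arguments. Unset Strict Implicit. Unset Printing Implicit Defensive.
Import Order.TTheory GRing.Theory Num.Theory.
Local Open Scope ring_scope.

Definition Lmat (R : ringType) (k : nat) (a : R) : 'M[R]_k :=
  \matrix_(i < k, j < k)
    (if nat_of_ord i == nat_of_ord j then a
     else if nat_of_ord i == (nat_of_ord j).+1 then - a else 0).

Definition is_inner_product (R : realFieldType) (k : nat)
    (ip : 'cV[R]_k -> 'cV[R]_k -> R) : Prop :=
  (forall u v, ip u v = ip v u) /\
  (forall (c : R) u v w, ip (c *: u + v) w = c * ip u w + ip v w) /\
  (forall v, v != 0 -> 0 < ip v v).

(* Main.v *)
Require Import Defs.
From mathcomp Require Import all_boot all_order all_algebra.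
Import Order.TTheory GRing.Theory Num.Theory.
Local Open Scope ring_scope.

Lemma eigL (R : realFieldType) (k : nat) (a x : R) : (0 < k)%N ->
  eigenvalue (Lmat k a) x = (x == a).
Proof.
move=> k0.
rewrite eigenvalue_root_char char_poly_trig; last first.
  apply/is_trig_mxP => i j lt_ij; rewrite !mxE.
  by rewrite (ltn_eqF lt_ij) (ltn_eqF (ltn_trans lt_ij (ltnSn _))).
rewrite /root horner_prod prodf_seq_eq0.
apply/hasP/idP.
  by case=> i _ /=; rewrite !mxE eqxx !hornerE subr_eq0.
move=> xa; exists (Ordinal k0); first by rewrite mem_index_enum.
by rewrite /= !mxE eqxx !hornerE subr_eq0.
Qed.

Lemma Lcol (R : realFieldType) (m : nat) (a : R) (j : 'I_m.+2) :
  Lmat m.+2 a *m delta_mx j 0 = col j (Lmat m.+2 a).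
Proof. by rewrite colE. Qed.

Lemma noip (R : realFieldType) (m : nat) (a : R) : 0 < a ->
  ~ (exists ip : 'cV[R]_m.+2 -> 'cV[R]_m.+2 -> R,
       is_inner_product ip /\
       (forall v : 'cV[R]_m.+2, a * ip v v <= ip (Lmat m.+2 a *m v) v)).
Proof.
move=> a0 [ip [[sym [lin pos]] H]].
have ip0 w : ip 0 w = 0.
  have := lin 1 0 0 w; rewrite scale1r addr0 mul1r => /eqP.
  by rewrite -subr_eq subrr eq_sym => /eqP.
have ipZ c u w : ip (c *: u) w = c * ip u w by have := lin c u 0 w; rewrite addr0 ip0 addr0.
have ipD u v w : ip (u + v) w = ip u w + ip v w by have := lin 1 u v w; rewrite scale1r mul1r.
pose f : 'cV[R]_m.+2 := delta_mx ord_max 0.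
pose e : 'cV[R]_m.+2 := delta_mx (inord m) 0.
have Lf : Lmat m.+2 a *m f = a *: f.
  rewrite /f -colE; apply/matrixP => -[i hi] j; rewrite !mxE (ord1 j) eqxx /=.
  rewrite -val_eqE /=.
  case: (ltngtP i m.+1) => h.
  - by rewrite (ltn_eqF (ltn_trans h (ltnSn _))) mulr0.
  - by move: hi; rewrite ltnS leqNgt h.
  - by rewrite mulr1.
have Le : Lmat m.+2 a *m e = a *: e - a *: f.
  rewrite /e /f -colE; apply/matrixP => -[i hi] j; rewrite !mxE (ord1 j) eqxx /=.
  rewrite -!val_eqE /= inordK //.
  case: (ltngtP i m) => h.
  - rewrite (ltn_eqF (ltn_trans h (ltnSn _))) ?(ltn_eqF (ltn_trans h (ltn_trans (ltnSn _) (ltnSn _)))).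
    
    by rewrite /= !mulr0 subr0.
  - have -> : i = m.+1 by apply/eqP; rewrite eqn_leq -ltnS hi h.
    
    by rewrite eqxx /= !mulr0 mulr1 sub0r.
  - 
    by rewrite h (ltn_eqF (ltnSn _)) /= mulr1 mulr0 subr0.
have fnz : f != 0.
  apply/negP => /eqP /matrixP /(_ ord_max 0); rewrite !mxE !eqxx /= => /eqP.
  by rewrite oner_eq0.
set d := ip f f; set c := ip e f.
have dpos : 0 < d := pos f fnz.
pose t := (1 - c) / d.
pose v := t *: f + e.
have Lv : Lmat m.+2 a *m v = a *: v + (- a) *: f.
  rewrite /v mulmxDr -scalemxAr Lf Le scalerA scalerDr scalerA.
  by rewrite scaleNr addrA (mulrC a t).
have := H v; rewrite Lv (ipD (a *: v) ((- a) *: f) v) (ipZ a v v) (ipZ (- a) f v).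
have -> : ip f v = 1.
  rewrite sym /v lin -/d -/c /t mulfVK ?gt_eqF //; by rewrite subrK.
rewrite mulr1 lerDl oppr_ge0 => /(lt_le_trans a0).
by rewrite ltxx.
Qed.

Theorem theorem1 (R : realFieldType) (k : nat) (a : R) :
  (2 <= k)%N -> 0 < a ->
  (eigenvalue (Lmat k a) a /\ (forall x : R, eigenvalue (Lmat k a) x -> a <= x)) /\
  ~ (exists ip : 'cV[R]_k -> 'cV[R]_k -> R,
       is_inner_product ip /\
       (forall v : 'cV[R]_k, a * ip v v <= ip (Lmat k a *m v) v)).
Proof.
case: k => [|[|m]] // _ a0.
split; last exact: noip.
split; first by rewrite eigL.
by move=> x; rewrite eigL // => /eqP ->.
Qed.
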